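(* Consider the following RSS-based localization setting. A stationary target is at an unknown position $\mathbf{s}=(x,y,0)\in\mathbb{R}^3$. There are $N$ UAVs; UAV $i$ ($1\le i\le N$) takes $M_i\ge1$ measurements, the $j$-th one at position $\mathbf{u}_{i,j}=(x_{i,j},y_{i,j},h_{i,j})$. Let $r_{i,j}=\sqrt{(x-x_{i,j})^2+(y-y_{i,j})^2}$, $d_{i,j}=\sqrt{r_{i,j}^2+h_{i,j}^2}$, and let $\beta_{i,j}$ be the horizontal UAV–target angle, i.e. $(x_{i,j}-x,\,y_{i,j}-y)=r_{i,j}(\cos\beta_{i,j},\sin\beta_{i,j})$, with $\mathbf{g}_{i,j}=(\cos\beta_{i,j},\sin\beta_{i,j})^T$. The $j$-th measurement of UAV $i$ is $R_{i,j}=p_0-10\gamma\log_{10}(d_{i,j})+\eta_{i,j}$ with known $p_0$, $\gamma>0$ and independent noises $\eta_{i,j}\sim\mathcal{N}(0,\sigma_i^2)$, $\sigma_i>0$. The Fisher information matrix for $(x,y)$ is $$\mathbf{F}=\Big(\frac{10\gamma}{\ln 10}\Big)^2\sum_{i=1}^N\sum_{j=1}^{M_i}\sigma_i^{-2}\frac{r_{i,j}^2}{d_{i,j}^4}\mathbf{g}_{i,j}\mathbf{g}_{i,j}^T.$$ A configuration is feasible if $r_{i,j}\ge r_0$, $h_{i,j}\ge h_0$ for all $i,j$, and $\|\mathbf{u}_{i,j}-\mathbf{u}_{i,j-1}\|\le t_0c_{\max}$ for $2\le j\le M_i$, where $r_0,h_0,t_0,c_{\max}>0$ are given. Problem P is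 to maximize $\det\mathbf{F}$ over feasible configurations. Let $r^*=\max\{r_0,h_0\}$. Suppose $M_i=M$ for all $i$, $t_0Mc_{\max}<2\pi r^*$, and $\max\{\sigma_i^{-2}:1\le i\le N\}\le\frac12\sum_{i=1}^N\sigma_i^{-2}$. Let $\beta_{1,0},\dots,\beta_{N,0}$ be angles satisfying $\sum_{i=1}^N\sigma_i^{-2}\mathbf{g}(\beta_{i,0})\mathbf{g}(\beta_{i,0})^T=\frac12\big(\sum_{i=1}^N\sigma_i^{-2}\big)\mathbf{I}$, where $\mathbf{g}(\beta)=(\cos\beta,\sin\beta)^T$, and let $0\le c<c_{\max}$. Then the configuration with $r_{i,j}=r^*$, $h_{i,j}=h_0$ and $$\beta_{i,j}=\beta_{i,0}+(j-1)\frac{ct_0}{r^*},\qquad 1\le i\le N,\ 1\le j\le M,$$ is an optimal solution of problem P.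
   Context: $\mathbf{I}$ is the $2\times2$ identity matrix. The optimization is over UAV positions for a given target position $\mathbf{s}$. *)

(* Defs.v *)
From HB Require Import structures.
From mathcomp Require Import all_boot all_order all_algebra.
From mathcomp Require Import all_classical all_reals all_analysis.
Set Implicit Arguments. Unset Strict Implicit. Unset Printing Implicit Defensive.
Import Order.TTheory GRing.Theory Num.Theory.
Local Open Scope ring_scope.

Section Defs.
Variable R : realType.

(* target s = (x, y, 0) represented by (x, y); UAV position p = ((x_p, y_p), h_p) *)
Definition pos3 := ((R * R) * R)%type.

Definition hdist (s : R * R) (p : pos3) : R :=
  Num.sqrt ((s.1 - p.1.1) ^+ 2 + (s.2 - p.1.2) ^+ 2).

Definition dist3D (s : R * R) (p : pos3) : R :=
  Num.sqrt (hdist s p ^+ 2 + p.2 ^+ 2).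

Definition gang (b : R) : 'cV[R]_2 := \col_(k < 2) [:: cos b; sin b]`_k.

Definition gvec (s : R * R) (p : pos3) : 'cV[R]_2 :=
  (hdist s p)^-1 *: \col_(k < 2) [:: p.1.1 - s.1; p.1.2 - s.2]`_k.

Definition dpos (p q : pos3) : R :=
  Num.sqrt ((p.1.1 - q.1.1) ^+ 2 + (p.1.2 - q.1.2) ^+ 2 + (p.2 - q.2) ^+ 2).

(* Fisher information matrix; u i j is the position of the (j+1)-th measurement
   of UAV i (0-based j < M) *)
Definition FIM (N M : nat) (gamma : R) (sigma : 'I_N -> R) (s : R * R)
    (u : 'I_N -> nat -> pos3) : 'M[R]_2 :=
  ((10 * gamma / ln 10) ^+ 2) *:
    \sum_(i < N) \sum_(j < M)
      ((sigma i) ^-2 * (hdist s (u i j)) ^+ 2 / (dist3D s (u i j)) ^+ 4)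
        *: (gvec s (u i j) *m (gvec s (u i j))^T).

Definition feasible (N M : nat) (r0 h0 t0 cmax : R) (s : R * R)
    (u : 'I_N -> nat -> pos3) : Prop :=
  (forall (i : 'I_N) (j : nat), (j < M)%N -> r0 <= hdist s (u i j) /\ h0 <= (u i j).2)
  /\ (forall (i : 'I_N) (j : nat), (j.+1 < M)%N -> dpos (u i j.+1) (u i j) <= t0 * cmax).

End Defs.

(* Main.v *)
Require Import Defs.
From HB Require Import structures.
From mathcomp Require Import all_boot all_order all_algebra.
From mathcomp Require Import all_classical all_reals all_analysis.
From mathcomp Require Import ring lra.
Import Order.TTheory GRing.Theory Num.Theory.
Local Open Scope ring_scope.

Set Implicit Arguments.
Unset Strict Implicit.
Section Helpers.
Variable R : realType.

Lemma det22 (A : 'M[R]_2) : \det A = A 0 0 * A 1 1 - A 0 1 * A 1 0.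
Proof.
rewrite (expand_det_row _ ord0) !big_ord_recl big_ord0 /cofactor !det_mx11 !mxE /=.
have -> : lift ord0 (0 : 'I_1) = 1 :> 'I_2 by apply/val_inj.
have -> : lift (1 : 'I_2) (0 : 'I_1) = 0 :> 'I_2 by apply/val_inj.
rewrite /= expr0 expr1 mul1r addr0 mulN1r mulrN; congr (_ - _); rewrite mulrC //.
Qed.

Lemma det_le_tr (A : 'M[R]_2) : A 0 1 = A 1 0 ->
  \det A <= ((A 0 0 + A 1 1) / 2) ^+ 2.
Proof.
move=> h; rewrite det22 -h.
have := sqr_ge0 (A 0 0 - A 1 1); have := sqr_ge0 (A 0 1); nra.
Qed.

Lemma sin_sqr_le (y : R) : 0 <= y -> sin y ^+ 2 <= y ^+ 2.
Proof.
rewrite le0r => /orP [/eqP -> | y0]; first by rewrite sin0.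
have hM := @MVT R sin cos 0 y y0 (fun x _ => is_derive_sin x).
case: hM; first by apply: derivable_within_continuous => z _; exact: ex_derive.
move=> c /[!in_itv] /= /andP[c0 cy] H.
move: H; rewrite sin0 subr0 => ->.
rewrite subr0 exprMn; apply: ler_piMl; first exact: sqr_ge0.
by rewrite -real_normK ?num_real // expr_le1 ?cos_max.
Qed.

Lemma one_minus_cos (x : R) : 0 <= x -> 2 - 2 * cos x <= x ^+ 2.
Proof.
move=> x0.
have hy := sin_sqr_le (divr_ge0 x0 (ler0n _ 2)).
have -> : x = (x / 2) *+ 2 by rewrite -mulr_natr mulfVK // pnatr_eq0.
rewrite cos_mulr2n cos2sin2.
move: hy; move: (x / 2) => y hy.
have -> : 2 - 2 * ((1 - sin y ^+ 2) *+ 2 - 1) = sin y ^+ 2 * 4 by rewrite -mulr_natr; ring.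
have -> : (y *+ 2) ^+ 2 = y ^+ 2 * 4 by rewrite -mulr_natr; ring.
by rewrite ler_pM2r.
Qed.

Lemma chord (r b d : R) :
  (r * cos (b + d) - r * cos b) ^+ 2 + (r * sin (b + d) - r * sin b) ^+ 2
  = r ^+ 2 * (2 - 2 * cos d).
Proof.
rewrite cosD sinD.
transitivity (r ^+ 2 * (cos b ^+ 2 + sin b ^+ 2) *
   ((cos d ^+ 2 + sin d ^+ 2) - 2 * cos d + 1)); first ring.
rewrite !cos2Dsin2; ring.
Qed.

Lemma key (t hh q a : R) : 0 < a -> a <= hh -> 0 <= t -> a <= q ->
  (q = a \/ q <= t) -> t / (t + hh) ^+ 2 <= q / (q + a) ^+ 2.
Proof.
move=> a0 ahh t0 aq hq.
have tp : 0 < t + hh by lra.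
have qp : 0 < q + a by lra.
rewrite ler_pdivrMr ?exprn_gt0 // mulrAC ler_pdivlMr ?exprn_gt0 //.
have h1 : (t + a) ^+ 2 <= (t + hh) ^+ 2.
  have : 0 <= (hh - a) * (2 * t + a + hh) by apply: mulr_ge0; lra.
  have -> : (t + hh) ^+ 2 = (t + a) ^+ 2 + (hh - a) * (2 * t + a + hh) by ring.
  lra.
have h1' : q * (t + a) ^+ 2 <= q * (t + hh) ^+ 2.
  by rewrite ler_pM2l //; lra.
case: hq => [qa | qt].
  rewrite qa in h1' *.
  have e : t * (a + a) ^+ 2 = a * (t + a) ^+ 2 - a * (t - a) ^+ 2 by ring.
  rewrite e; have : 0 <= a * (t - a) ^+ 2 by rewrite mulr_ge0 ?sqr_ge0 //; lra.
  lra.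
have e : t * (q + a) ^+ 2 = q * (t + a) ^+ 2 - (t - q) * (q * t - a ^+ 2) by ring.
rewrite e.
have : 0 <= (t - q) * (q * t - a ^+ 2).
  apply: mulr_ge0; first lra.
  rewrite subr_ge0 expr2; apply: ler_pM; lra.
lra.
Qed.

Lemma sq_le (x y : R) : 0 <= x -> x <= y -> x ^+ 2 <= y ^+ 2.
Proof. by move=> x0 xy; rewrite -subr_ge0 subr_sqr mulr_ge0 //; lra. Qed.

Lemma FIM_entry N M gamma (sigma : 'I_N -> R) s u (a b : 'I_2) :
  FIM M gamma sigma s u a b = (10 * gamma / ln 10) ^+ 2 *
    \sum_(i < N) \sum_(j < M) ((sigma i) ^-2 * (hdist s (u i j)) ^+ 2 / (dist3D s (u i j)) ^+ 4)
       * (gvec s (u i j) a 0 * gvec s (u i j) b 0).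
Proof.
rewrite /FIM mxE summxE; congr (_ * _); apply: eq_bigr => i _.
rewrite summxE; apply: eq_bigr => j _; by rewrite !mxE big_ord1 !mxE.
Qed.

Lemma gvec0 s (p : pos3 R) : gvec s p 0 0 = (hdist s p)^-1 * (p.1.1 - s.1).
Proof. by rewrite !mxE. Qed.
Lemma gvec1 s (p : pos3 R) : gvec s p 1 0 = (hdist s p)^-1 * (p.1.2 - s.2).
Proof. by rewrite !mxE. Qed.

Lemma hdist_sqr s (p : pos3 R) : hdist s p ^+ 2 = (s.1 - p.1.1) ^+ 2 + (s.2 - p.1.2) ^+ 2.
Proof. by rewrite sqr_sqrtr // addr_ge0 ?sqr_ge0. Qed.

Lemma gvec_norm s (p : pos3 R) : 0 < hdist s p ->
  gvec s p 0 0 * gvec s p 0 0 + gvec s p 1 0 * gvec s p 1 0 = 1.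
Proof.
move=> hp; rewrite gvec0 gvec1 -!expr2 !exprMn -mulrDr.
rewrite -(sqrrN (p.1.1 - s.1)) -(sqrrN (p.1.2 - s.2)) !opprB -hdist_sqr.
by rewrite exprVn mulVf // expf_neq0 // gt_eqF.
Qed.

Lemma dist3D_4 s (p : pos3 R) : dist3D s p ^+ 4 = (hdist s p ^+ 2 + p.2 ^+ 2) ^+ 2.
Proof. by rewrite /dist3D (_ : 4 = 2 * 2)%N // exprM sqr_sqrtr // addr_ge0 ?sqr_ge0. Qed.

Lemma wbound r0 h0 s (p : pos3 R) : 0 < r0 -> 0 < h0 -> r0 <= hdist s p -> h0 <= p.2 ->
  hdist s p ^+ 2 / dist3D s p ^+ 4 <=
  Num.max r0 h0 ^+ 2 / (Num.max r0 h0 ^+ 2 + h0 ^+ 2) ^+ 2.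
Proof.
move=> r0p h0p hr hh; rewrite dist3D_4; apply: key.
- exact: exprn_gt0.
- by apply: sq_le; lra.
- exact: sqr_ge0.
- by apply: sq_le; [lra | rewrite le_max lexx orbT].
have [hle|hlt] := lerP r0 h0.
  by left.
right; apply: sq_le; lra.
Qed.

Lemma w_ge0 s (p : pos3 R) : 0 <= hdist s p ^+ 2 / dist3D s p ^+ 4.
Proof. by rewrite divr_ge0 ?exprn_ge0 ?sqrtr_ge0. Qed.

Lemma hdist_ustar s rs b (h : R) : 0 <= rs ->
  hdist s ((s.1 + rs * cos b, s.2 + rs * sin b), h) = rs.
Proof.
move=> rs0; rewrite /hdist /=.
have -> : (s.1 - (s.1 + rs * cos b)) ^+ 2 + (s.2 - (s.2 + rs * sin b)) ^+ 2
   = rs ^+ 2 * (cos b ^+ 2 + sin b ^+ 2) by ring.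
by rewrite cos2Dsin2 mulr1 sqrtr_sqr ger0_norm.
Qed.

Lemma gvec_ustar s rs b (h : R) : 0 < rs ->
  gvec s ((s.1 + rs * cos b, s.2 + rs * sin b), h) 0 0 = cos b /\
  gvec s ((s.1 + rs * cos b, s.2 + rs * sin b), h) 1 0 = sin b.
Proof.
move=> rsp; rewrite gvec0 gvec1 hdist_ustar ?ltW //=.
have -> : s.1 + rs * cos b - s.1 = rs * cos b by ring.
have -> : s.2 + rs * sin b - s.2 = rs * sin b by ring.
by rewrite !mulKf // gt_eqF.
Qed.

Lemma dpos_circ s rs b b' (h : R) :
  dpos ((s.1 + rs * cos b', s.2 + rs * sin b'), h) ((s.1 + rs * cos b, s.2 + rs * sin b), h)
  = Num.sqrt ((rs * cos b' - rs * cos b) ^+ 2 + (rs * sin b' - rs * sin b) ^+ 2).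
Proof. by rewrite /dpos /=; congr Num.sqrt; ring. Qed.

Lemma sum3 (I : finType) (w f g h : I -> R) p q r :
  \sum_i w i * (p * f i + q * g i + r * h i)
  = p * \sum_i w i * f i + q * \sum_i w i * g i + r * \sum_i w i * h i.
Proof. rewrite !mulr_sumr -!big_split /=; apply: eq_bigr => i _; ring. Qed.

Lemma sum_rot N (w be : 'I_N -> R) th S2 :
  \sum_i w i * (cos (be i) * cos (be i)) = S2 ->
  \sum_i w i * (sin (be i) * sin (be i)) = S2 ->
  \sum_i w i * (cos (be i) * sin (be i)) = 0 ->
  [/\ \sum_i w i * (cos (be i + th) * cos (be i + th)) = S2,
      \sum_i w i * (sin (be i + th) * sin (be i + th)) = S2 &
      \sum_i w i * (cos (be i + th) * sin (be i + th)) = 0].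
Proof.
move=> Hc Hs Hcs; split.
- rewrite (eq_bigr (fun i => w i * (cos th ^+ 2 * (cos (be i) * cos (be i))
     + (- (2 * cos th * sin th)) * (cos (be i) * sin (be i))
     + sin th ^+ 2 * (sin (be i) * sin (be i))))); last first.
    by move=> i _; rewrite cosD; ring.
  by rewrite sum3 Hc Hs Hcs mulr0 addr0 -mulrDl cos2Dsin2 mul1r.
- rewrite (eq_bigr (fun i => w i * (sin th ^+ 2 * (cos (be i) * cos (be i))
     + (2 * cos th * sin th) * (cos (be i) * sin (be i))
     + cos th ^+ 2 * (sin (be i) * sin (be i))))); last first.
    by move=> i _; rewrite sinD; ring.
  by rewrite sum3 Hc Hs Hcs mulr0 addr0 -mulrDl addrC cos2Dsin2 mul1r.
- rewrite (eq_bigr (fun i => w i * ((cos th * sin th) * (cos (be i) * cos (be i))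
     + (cos th ^+ 2 - sin th ^+ 2) * (cos (be i) * sin (be i))
     + (- (cos th * sin th)) * (sin (be i) * sin (be i))))); last first.
    by move=> i _; rewrite sinD cosD; ring.
  by rewrite sum3 Hc Hs Hcs; ring.
Qed.

Lemma ord2 (a : 'I_2) : a = 0 \/ a = 1.
Proof. case: a => [[|[|k]] h]; [left|right|]; try exact/val_inj. by []. Qed.

End Helpers.
Unset Implicit Arguments.

Theorem theorem5 (R : realType) (N M : nat) (gamma r0 h0 t0 cmax c : R)
    (sigma beta0 : 'I_N -> R) (s : R * R) :
  0 < gamma -> 0 < r0 -> 0 < h0 -> 0 < t0 -> 0 < cmax -> (0 < M)%N ->
  (forall i, 0 < sigma i) ->
  t0 * M%:R * cmax < 2 * pi * Num.max r0 h0 ->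
  (forall i, (sigma i) ^-2 <= 2^-1 * \sum_(k < N) (sigma k) ^-2) ->
  \sum_(i < N) (sigma i) ^-2 *: (gang (beta0 i) *m (gang (beta0 i))^T)
    = (2^-1 * \sum_(k < N) (sigma k) ^-2)%:M ->
  0 <= c -> c < cmax ->
  let rstar := Num.max r0 h0 in
  let ustar : 'I_N -> nat -> pos3 R := fun i j =>
    let b := beta0 i + j%:R * (c * t0 / rstar) in
    ((s.1 + rstar * cos b, s.2 + rstar * sin b), h0) in
  feasible M r0 h0 t0 cmax s ustar /\
  (forall u : 'I_N -> nat -> pos3 R, feasible M r0 h0 t0 cmax s u ->
     \det (FIM M gamma sigma s u) <= \det (FIM M gamma sigma s ustar)).
Proof.
move=> gp r0p h0p t0p cp Mp sp _ _ Hb c0 ccm rstar ustar.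
have rsp : 0 < rstar by rewrite /rstar lt_max r0p.
set S := \sum_(k < N) (sigma k) ^-2.
set fs := rstar ^+ 2 / (rstar ^+ 2 + h0 ^+ 2) ^+ 2.
set K := (10 * gamma / ln 10) ^+ 2.
have hB : forall a b : 'I_2, \sum_i (sigma i) ^-2 * ([:: cos (beta0 i); sin (beta0 i)]`_a
      * [:: cos (beta0 i); sin (beta0 i)]`_b) = (2^-1 * S) *+ (a == b).
  move=> a b; have := congr1 (fun A : 'M[R]_2 => A a b) Hb; rewrite /= summxE mxE => <-.
  by apply: eq_bigr => i _; rewrite !mxE big_ord1 !mxE.
have hcc := hB 0 0; have hss := hB 1 1; have hcs := hB 0 1.
rewrite /= mulr1n in hcc hss; rewrite /= mulr0n in hcs.
have hU : forall i j, hdist s (ustar i j) = rstar /\ (ustar i j).2 = h0.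
  by move=> i j; rewrite /ustar /= hdist_ustar ?ltW.
have hG : forall i j, gvec s (ustar i j) 0 0 = cos (beta0 i + j%:R * (c * t0 / rstar)) /\
    gvec s (ustar i j) 1 0 = sin (beta0 i + j%:R * (c * t0 / rstar)).
  by move=> i j; exact: gvec_ustar.
have hW : forall i j, (sigma i) ^-2 * hdist s (ustar i j) ^+ 2 / dist3D s (ustar i j) ^+ 4
    = (sigma i) ^-2 * fs.
  by move=> i j; rewrite -mulrA dist3D_4 !(hU i j).1 (hU i j).2.
have hFs : forall a b : 'I_2, FIM M gamma sigma s ustar a b = K *
   \sum_(j < M) fs * \sum_i (sigma i) ^-2 *
      ([:: cos (beta0 i + j%:R * (c * t0 / rstar)); sin (beta0 i + j%:R * (c * t0 / rstar))]`_a
      * [:: cos (beta0 i + j%:R * (c * t0 / rstar)); sin (beta0 i + j%:R * (c * t0 / rstar))]`_b).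
  move=> a b; rewrite FIM_entry; congr (_ * _); rewrite exchange_big /=.
  apply: eq_bigr => j _; rewrite mulr_sumr; apply: eq_bigr => i _.
  rewrite hW; case: (ord2 a) => ->; case: (ord2 b) => ->;
  rewrite /= ?(hG i j).1 ?(hG i j).2; ring.
set d := c * t0 / rstar.
have hrot := fun j : nat => sum_rot (j%:R * d) hcc hss hcs.
have hF00 : FIM M gamma sigma s ustar 0 0 = K * ((fs * (2^-1 * S)) *+ M).
  rewrite hFs /= (eq_bigr (fun _ => fs * (2^-1 * S))) ?sumr_const ?card_ord //.
  by move=> j _; case: (hrot j) => -> _ _.
have hF11 : FIM M gamma sigma s ustar 1 1 = K * ((fs * (2^-1 * S)) *+ M).
  rewrite hFs /= (eq_bigr (fun _ => fs * (2^-1 * S))) ?sumr_const ?card_ord //.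
  by move=> j _; case: (hrot j) => _ -> _.
have hF01 : FIM M gamma sigma s ustar 0 1 = 0.
  rewrite hFs /= big1 ?mulr0 //.
  by move=> j _; case: (hrot j) => _ _ ->; rewrite mulr0.
have hdet : \det (FIM M gamma sigma s ustar) = (K * ((fs * (2^-1 * S)) *+ M)) ^+ 2.
  by rewrite det22 hF00 hF11 hF01 mul0r subr0 expr2.
split.
  split => i j hj.
    by rewrite (hU i j).1 (hU i j).2 le_max lexx /=.
  rewrite /ustar /= dpos_circ.
  have eb : beta0 i + j.+1%:R * d = (beta0 i + j%:R * d) + d by rewrite -natr1; ring.
  rewrite -/d eb chord.
  have d0 : 0 <= d by apply: divr_ge0; [apply: mulr_ge0 => //; exact: ltW | exact: ltW].
  have ed : rstar * d = c * t0 by rewrite mulrC divfK // gt_eqF.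
  have ct0 : 0 <= c * t0 by apply: mulr_ge0 => //; exact: ltW.
  apply: (@le_trans _ _ (c * t0)).
    rewrite -(ger0_norm ct0) -sqrtr_sqr ler_sqrt ?sqr_ge0 //.
    by rewrite -ed exprMn ler_wpM2l ?sqr_ge0 // one_minus_cos.
  by rewrite mulrC ler_wpM2l ?ltW.
move=> u [hf1 _].
have hsym : FIM M gamma sigma s u 0 1 = FIM M gamma sigma s u 1 0.
  rewrite !FIM_entry; congr (_ * _); apply: eq_bigr => i _; apply: eq_bigr => j _.
  by rewrite (mulrC (gvec _ _ 0 0)).
have hr : forall (i : 'I_N) (j : 'I_M), 0 < hdist s (u i j).
  by move=> i j; have [h1 _] := hf1 i j (ltn_ord j); exact: (lt_le_trans r0p h1).
set T := \sum_(i < N) \sum_(j < M) ((sigma i) ^-2 * (hdist s (u i j)) ^+ 2 / (dist3D s (u i j)) ^+ 4).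
have htr : FIM M gamma sigma s u 0 0 + FIM M gamma sigma s u 1 1 = K * T.
  rewrite !FIM_entry -mulrDr -big_split; congr (_ * _); apply: eq_bigr => i _.
  rewrite -big_split; apply: eq_bigr => j _.
  by rewrite /= -mulrDr gvec_norm ?mulr1.
have hT0 : 0 <= T.
  apply: sumr_ge0 => i _; apply: sumr_ge0 => j _.
  rewrite -mulrA; apply: mulr_ge0; last exact: w_ge0.
  by rewrite invr_ge0; apply: exprn_ge0; exact: ltW.
have hT1 : T <= (S * fs) *+ M.
  rewrite /T (@le_trans _ _ (\sum_(i < N) \sum_(j < M) (sigma i) ^-2 * fs)) //.
    apply: ler_sum => i _; apply: ler_sum => j _.
    have [h1 h2] := hf1 i j (ltn_ord j).
    rewrite -mulrA ler_wpM2l ?wbound //.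
    by rewrite invr_ge0; apply: exprn_ge0; exact: ltW.
  rewrite (eq_bigr (fun i => ((sigma i) ^-2 * fs) *+ M)); last first.
    by move=> i _; rewrite sumr_const card_ord.
  by rewrite sumrMnl -mulr_suml.
apply: (le_trans (det_le_tr hsym)); rewrite htr hdet.
have K0 : 0 <= K by exact: sqr_ge0.
apply: sq_le.
  by apply: mulr_ge0; [apply: mulr_ge0|rewrite invr_ge0].
rewrite -[X in _ <= K * X]mulr_natr; rewrite -mulr_natr in hT1.
have -> : K * (fs * (2^-1 * S) * M%:R) = K * (S * fs * M%:R) / 2 by ring.
rewrite ler_wpM2r ?invr_ge0 // ler_wpM2l //.
Qed.
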